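(* (1) Let $C$ be a binary Euclidean LCD $[n,k]$ code with generator matrix $G$, let $\mathbf{x}\in C^{\perp_E}$, and let $C'$ be the binary linear code with generator matrix $G'=\begin{pmatrix}1&\mathbf{x}\\ \mathbf{0}&G\end{pmatrix}$. If $wt(\mathbf{x})$ is even, then $C'$ is a binary Euclidean LCD $[n+1,k+1]$ code. (2) Let $C$ be a ternary Euclidean LCD $[n,k]$ code with generator matrix $G$, let $\mathbf{x}\in C^{\perp_E}$, and let $C'$ be the ternary linear code with generator matrix $G'=\begin{pmatrix}1&\mathbf{x}\\ \mathbf{0}&G\end{pmatrix}$. If $wt(\mathbf{x})\not\equiv 2 \pmod 3$, then $C'$ is a ternary Euclidean LCD $[n+1,k+1]$ code. (3) Let $C$ be a quaternary Hermitian LCD $[n,k]$ code with generator matrix $G$, let $\mathbf{x}\in C^{\perp_H}$, and let $C'$ be the quaternary linear code with generator matrix $G'=\begin{pmatrix}1&\mathbf{x}\\ \mathbf{0}&G\end{pmatrix}$. If $wt(\mathbf{x})$ is even, then $C'$ is a quaternary Hermitian LCD $[n+1,k+1]$ code.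
   Context: Binary, ternary, quaternary codes are linear codes over $\mathbb{F}_2,\mathbb{F}_3,\mathbb{F}_4$. An $[n,k]$ code is a $k$-dimensional subspace of $\mathbb{F}_q^n$; a generator matrix is a $k\times n$ matrix whose rows form a basis. $wt(\mathbf{x})$ is the Hamming weight (number of nonzero coordinates). Euclidean inner product $\langle x,y\rangle_E=\sum x_iy_i$ with dual $C^{\perp_E}$; on $\mathbb{F}_4^n$ the Hermitian inner product is $\langle x,y\rangle_H=\sum x_iy_i^2$ with dual $C^{\perp_H}$. A code is (Euclidean/Hermitian) LCD if $C\cap C^{\perp}=\{0\}$. In $G'$, $\mathbf{0}$ denotes the zero column of length $k$. *)

(* Defs.v *)
From HB Require Import structures.
From mathcomp Require Import all_boot all_order all_algebra all_field.
Set Implicit Arguments. Unset Strict Implicit. Unset Printing Implicit Defensive.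
Import GRing.Theory.
Local Open Scope ring_scope.

(* A linear [n,k] code over F is given by a generator matrix G : 'M_(k,n)
   whose rows form a basis (row_free G); the code is the row space of G,
   and a codeword c is a row vector with (c <= G)%MS. *)

Definition wt (F : fieldType) n (x : 'rV[F]_n) : nat :=
  #|[set i : 'I_n | x 0 i != 0]|.

Definition ipE (F : fieldType) n (x y : 'rV[F]_n) : F := \sum_i x 0 i * y 0 i.

(* Hermitian inner product  <x,y>_H = sum x_i y_i^2  (intended for F_4) *)
Definition ipH (F : fieldType) n (x y : 'rV[F]_n) : F :=
  \sum_i x 0 i * (y 0 i) ^+ 2.

Definition in_dualE (F : fieldType) k n (G : 'M[F]_(k, n)) (y : 'rV[F]_n) :=
  forall c : 'rV[F]_n, (c <= G)%MS -> ipE c y = 0.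
Definition in_dualH (F : fieldType) k n (G : 'M[F]_(k, n)) (y : 'rV[F]_n) :=
  forall c : 'rV[F]_n, (c <= G)%MS -> ipH c y = 0.

Definition LCD_E (F : fieldType) k n (G : 'M[F]_(k, n)) :=
  forall v : 'rV[F]_n, (v <= G)%MS -> in_dualE G v -> v = 0.
Definition LCD_H (F : fieldType) k n (G : 'M[F]_(k, n)) :=
  forall v : 'rV[F]_n, (v <= G)%MS -> in_dualH G v -> v = 0.

Definition ext_gen (F : fieldType) k n (G : 'M[F]_(k, n)) (x : 'rV[F]_n)
  : 'M[F]_(1 + k, 1 + n) :=
  block_mx (1%:M : 'M[F]_1) x (0 : 'M[F]_(k, 1)) G.

(* Main.v *)
Require Import Defs.
From HB Require Import structures.
From mathcomp Require Import all_boot all_order all_algebra all_field.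
From mathcomp Require Import zify ring.
Set Implicit Arguments. Unset Strict Implicit. Unset Printing Implicit Defensive.
Import GRing.Theory.
Local Open Scope ring_scope.

Section Gen.
Variable F : fieldType.

Lemma sub_ext k n (G : 'M[F]_(k, n)) x (v : 'rV_(1 + n)) :
  (v <= ext_gen G x)%MS -> exists a u, (u <= G)%MS /\ v = row_mx a%:M (a *: x + u).
Proof.
case/submxP => w ->; rewrite -[w]hsubmxK /ext_gen mul_row_block.
exists (lsubmx w 0 0), (rsubmx w *m G); split; first exact: submxMl.
rewrite mulmx0 addr0 mulmx1 -mx11_scalar; congr row_mx.
by rewrite [lsubmx w in LHS]mx11_scalar mul_scalar_mx.
Qed.

Lemma ext_sub k n (G : 'M[F]_(k, n)) x a u :
  (u <= G)%MS -> (row_mx a%:M (a *: x + u) <= ext_gen G x)%MS.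
Proof.
case/submxP => b ->; apply/submxP; exists (row_mx a%:M b).
by rewrite /ext_gen mul_row_block mulmx0 addr0 mulmx1 mul_scalar_mx.
Qed.

Lemma ext_free k n (G : 'M[F]_(k, n)) x : row_free G -> row_free (ext_gen G x).
Proof.
move=> fG; rewrite -kermx_eq0; apply/eqP/row_matrixP => i; rewrite row0.
have: row i (kermx (ext_gen G x)) *m ext_gen G x = 0.
  by apply/sub_kermxP; rewrite row_sub.
move: (row i _) => w; rewrite -[w]hsubmxK /ext_gen mul_row_block.
rewrite mulmx0 addr0 mulmx1 => /eqP; rewrite row_mx_eq0 => /andP[/eqP l0].
rewrite l0 mul0mx add0r => /eqP rG.
have r0 : rsubmx w = 0 by apply: (row_free_inj fG); rewrite rG mul0mx.
by rewrite r0 row_mx0.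
Qed.

Lemma ipE_row n (p r : 'rV[F]_1) (q s : 'rV[F]_n) :
  ipE (row_mx p q) (row_mx r s) = ipE p r + ipE q s.
Proof. by rewrite /ipE big_split_ord /=; congr (_ + _); apply: eq_bigr => i _;
  rewrite ?row_mxEl ?row_mxEr. Qed.

Lemma ipH_row n (p r : 'rV[F]_1) (q s : 'rV[F]_n) :
  ipH (row_mx p q) (row_mx r s) = ipH p r + ipH q s.
Proof. by rewrite /ipH big_split_ord /=; congr (_ + _); apply: eq_bigr => i _;
  rewrite ?row_mxEl ?row_mxEr. Qed.

Lemma ip1E (a b : F) : ipE (a%:M : 'rV_1) b%:M = a * b.
Proof. by rewrite /ipE big_ord1 !mxE. Qed.

Lemma ip1H (a b : F) : ipH (a%:M : 'rV_1) b%:M = a * b ^+ 2.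
Proof. by rewrite /ipH big_ord1 !mxE. Qed.

Lemma ipE_lin n (c x u : 'rV[F]_n) a : ipE c (a *: x + u) = a * ipE c x + ipE c u.
Proof.
rewrite /ipE mulr_sumr -big_split; apply: eq_bigr => i _; by rewrite !mxE /= mulrDr mulrCA.
Qed.

Lemma ipE_sym n (c u : 'rV[F]_n) : ipE c u = ipE u c.
Proof. by apply: eq_bigr => i _; rewrite mulrC. Qed.

Lemma LCD_ext_E k n (G : 'M[F]_(k, n)) x :
  LCD_E G -> in_dualE G x -> 1 + ipE x x != 0 -> LCD_E (ext_gen G x).
Proof.
move=> lG dx nz v /sub_ext [a [u [uG ->]]] dv.
have := dv _ (ext_sub x 1 (sub0mx 1 G)).
rewrite scale1r addr0 ipE_row ip1E ipE_lin mul1r [ipE x u]ipE_sym (dx _ uG) addr0.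
rewrite -{1}[a]mulr1 -mulrDr => /eqP; rewrite mulf_eq0 (negPf nz) orbF => /eqP a0.
move: dv; rewrite a0 scale0r add0r => dv.
have -> : u = 0.
  apply: lG => // c cG; have := dv _ (ext_sub x 0 cG).
  by rewrite scale0r add0r ipE_row ip1E mul0r add0r.
by rewrite raddf0 row_mx0.
Qed.

Lemma sum_pow n (x : 'rV[F]_n) m : (0 < m)%N -> (forall y : F, y != 0 -> y ^+ m = 1) ->
  \sum_i x 0 i ^+ m = (wt x)%:R.
Proof.
move=> m0 hy; rewrite /wt.
rewrite (eq_bigr (fun i => if x 0 i != 0 then 1 else 0)); last first.
  move=> i _; case: ifP => [/hy //| /negbFE/eqP ->]; by rewrite expr0n eqn0Ngt m0.
rewrite -(big_mkcond (fun i => x 0 i != 0)) sumr_const cardsE.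
done.
Qed.


End Gen.
Section Herm.
Variable F : fieldType.
Hypothesis h2 : (2%:R : F) = 0.
Hypothesis h4 : forall y : F, y ^+ 4 = y.

Lemma sqrD (p q : F) : (p + q) ^+ 2 = p ^+ 2 + q ^+ 2.
Proof. by rewrite sqrrD -mulr_natr h2 mulr0 addr0. Qed.

Lemma ipH_swap n (x u : 'rV[F]_n) : ipH x u = (ipH u x) ^+ 2.
Proof.
rewrite /ipH (big_morph (fun y => y ^+ 2) sqrD (expr0n _ 2)).
apply: eq_bigr => i _; rewrite exprMn -exprM h4 mulrC.
done.
Qed.

Lemma ipH_lin n (x u : 'rV[F]_n) a :
  ipH x (a *: x + u) = a ^+ 2 * \sum_i x 0 i ^+ 3 + ipH x u.
Proof.
rewrite /ipH mulr_sumr -big_split; apply: eq_bigr => i _; rewrite !mxE /=.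
rewrite sqrD mulrDr exprMn; congr (_ + _); rewrite mulrCA; congr (_ * _).
Qed.

Lemma LCD_ext_H k n (G : 'M[F]_(k, n)) x :
  LCD_H G -> in_dualH G x -> 1 + \sum_i x 0 i ^+ 3 != 0 -> LCD_H (ext_gen G x).
Proof.
move=> lG dx nz v /sub_ext [a [u [uG ->]]] dv.
have := dv _ (ext_sub x 1 (sub0mx 1 G)).
rewrite scale1r addr0 ipH_row ip1H ipH_lin mul1r ipH_swap (dx _ uG) expr0n addr0.
rewrite -{1}[a ^+ 2]mulr1 -mulrDr => /eqP; rewrite mulf_eq0 (negPf nz) orbF.
rewrite expf_eq0 /= => /eqP a0.
move: dv; rewrite a0 scale0r add0r => dv.
have -> : u = 0.
  apply: lG => // c cG; have := dv _ (ext_sub x 0 cG).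
  by rewrite scale0r add0r ipH_row ip1H mul0r add0r.
by rewrite raddf0 row_mx0.
Qed.
End Herm.

Lemma pow_pred (F : finFieldType) (y : F) : y != 0 -> y ^+ #|F|.-1 = 1.
Proof.
move=> y0; apply: (mulfI y0); rewrite mulr1 -exprS prednK ?expf_card //.
by apply/card_gt0P; exists 0.
Qed.

Theorem theorem3p5 :
  (* (1) binary, Euclidean *)
  (forall (n k : nat) (G : 'M['F_2]_(k, n)) (x : 'rV['F_2]_n),
      row_free G -> LCD_E G -> in_dualE G x -> ~~ odd (wt x) ->
      row_free (ext_gen G x) /\ LCD_E (ext_gen G x)) /\
  (* (2) ternary, Euclidean *)
  (forall (n k : nat) (G : 'M['F_3]_(k, n)) (x : 'rV['F_3]_n),
      row_free G -> LCD_E G -> in_dualE G x -> (wt x %% 3 != 2)%N ->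
      row_free (ext_gen G x) /\ LCD_E (ext_gen G x)) /\
  (* (3) quaternary, Hermitian: F is the field with 4 elements *)
  (forall (F : finFieldType), #|F| = 4%N ->
    forall (n k : nat) (G : 'M[F]_(k, n)) (x : 'rV[F]_n),
      row_free G -> LCD_H G -> in_dualH G x -> ~~ odd (wt x) ->
      row_free (ext_gen G x) /\ LCD_H (ext_gen G x)).
Proof.
split; [|split].
- move=> n k G x fG lG dx ev; split; first exact: ext_free.
  apply: LCD_ext_E => //.
  have -> : ipE x x = \sum_i x 0 i ^+ 2 by apply: eq_bigr => i _; rewrite expr2.
  rewrite (@sum_pow _ _ _ 2) //; last first.
    move=> y /pow_pred; rewrite card_Fp //= expr1 => ->; exact: expr1n.
  have : (2 %| wt x)%N by rewrite dvdn2.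
  rewrite (dvdn_pcharf (pchar_Fp (isT : prime 2))) => /eqP ->.
  by rewrite addr0 oner_neq0.
- move=> n k G x fG lG dx ev; split; first exact: ext_free.
  apply: LCD_ext_E => //.
  have -> : ipE x x = \sum_i x 0 i ^+ 2 by apply: eq_bigr => i _; rewrite expr2.
  rewrite (@sum_pow _ _ _ 2) //; last first.
    by move=> y /pow_pred; rewrite card_Fp.
  rewrite addrC natr1 -(dvdn_pcharf (pchar_Fp (isT : prime 3))).
  apply/negP => h; move/negP: ev; apply; apply/eqP; lia.
- move=> F cF n k G x fG lG dx ev; split; first exact: ext_free.
  have c2 : 2%N \in [pchar F] by apply: (@card_finPcharP _ _ 2%N) => //; rewrite cF.
  apply: LCD_ext_H => //.
  + exact: pcharf0 c2.
  + by move=> y; rewrite -{1}cF expf_card.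
  rewrite (@sum_pow _ _ _ 3) //; last first.
    by move=> y /pow_pred; rewrite cF.
  have : (2 %| wt x)%N by rewrite dvdn2.
  rewrite (dvdn_pcharf c2) => /eqP ->.
  by rewrite addr0 oner_neq0.
Qed.
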